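(* There exist an argumentation semantics $\sigma$ whose extensions are maximal conflict-free sets (w.r.t. set inclusion) and argumentation frameworks $AF=(AR,Attacks)$, $AF'=(AR',Attacks')$ with $AF\preceq_N AF'$ such that the following statement does NOT hold: if for every $E\in\sigma(AF)$ the implication $$\{(a,b)\in Attacks': a\in AR'\setminus AR,\ b\in E\}=\emptyset\ \Longrightarrow\ \forall E'\in\sigma(AF'),\ E\subseteq E'$$ holds, then for all $E\in\sigma(AF)$ and all $E'\in\sigma(AF')$ we have $E'\not\subseteq AR$ or $E'=E$.
   Context: An argumentation framework is a pair $(AR,Attacks)$ with $AR$ a finite set and $Attacks\subseteq AR\times AR$; $a$ attacks $b$ iff $(a,b)\in Attacks$. A set $S$ is conflict-free iff no element of $S$ attacks an element of $S$. An argumentation semantics $\sigma$ assigns to each argumentation framework a set $\sigma(AF)$ of subsets of $AR$; ''$\sigma$'s extensions are maximal conflict-free sets'' means that for every $AF$, every $E\in\sigma(AF)$ is a $\subseteq$-maximal conflict-free subset of the argument set of $AF$. $AF\preceq_N AF'$ (normal expansion) iff $AR\subseteq AR'$, $Attacks\subseteq Attacks'$ and no $(a,b)\in Attacks'\setminus Attacks$ has both $a,b\in AR$. *)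

(* Defs.v *)
From mathcomp Require Import all_boot.
From mathcomp Require Import finmap.
Set Implicit Arguments. Unset Strict Implicit. Unset Printing Implicit Defensive.
Local Open Scope fset_scope.

Record AF := mkAF {
  AR : {fset nat};
  Attacks : {fset nat * nat};
  Attacks_wf : forall p, p \in Attacks -> (p.1 \in AR) && (p.2 \in AR)
}.

Definition attacks (F : AF) (a b : nat) : bool := (a, b) \in Attacks F.

Definition conflict_free (F : AF) (S : {fset nat}) : Prop :=
  forall a b, a \in S -> b \in S -> ~~ attacks F a b.

Definition maximal_conflict_free (F : AF) (S : {fset nat}) : Prop :=
  S `<=` AR F /\ conflict_free F S /\
  (forall T : {fset nat}, T `<=` AR F -> conflict_free F T -> S `<=` T -> T = S).

Definition semantics := AF -> {fset nat} -> Prop.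

Definition normal_expansion (F F' : AF) : Prop :=
  AR F `<=` AR F' /\ Attacks F `<=` Attacks F' /\
  (forall p, p \in Attacks F' -> p \notin Attacks F ->
     ~ ((p.1 \in AR F) && (p.2 \in AR F))).

Definition new_attacks_on (F F' : AF) (E : {fset nat}) : {fset nat * nat} :=
  [fset p in Attacks F' | (p.1 \in AR F' `\` AR F) && (p.2 \in E)].

(* Main.v *)
Require Import Defs.
From mathcomp Require Import all_boot.
From mathcomp Require Import finmap.
Local Open Scope fset_scope.

Definition ar1 : {fset nat} := [fset 1%N; 2%N].
Definition at1 : {fset nat * nat} := [fset (1%N, 2%N)].
Lemma wf1 : forall p, p \in at1 -> (p.1 \in ar1) && (p.2 \in ar1).
Proof. by move=> p; rewrite !inE => /eqP ->. Qed.
Definition F1 := mkAF wf1.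

Definition ar2 : {fset nat} := [fset 1%N; 2%N; 3%N].
Definition at2 : {fset nat * nat} := [fset (1%N, 2%N); (3%N, 1%N); (3%N, 2%N)].
Lemma wf2 : forall p, p \in at2 -> (p.1 \in ar2) && (p.2 \in ar2).
Proof. by move=> p; rewrite !inE => /orP [/orP [] | ] /eqP ->. Qed.
Definition F2 := mkAF wf2.

Definition sig : semantics := fun G S =>
  maximal_conflict_free G S /\ (3%N \in AR G -> S = [fset 2%N]) /\
  (3%N \notin AR G -> S = [fset 1%N]).

Lemma mcf1 : maximal_conflict_free F1 [fset 1%N].
Proof.
split; first by apply/fsubsetP => x; rewrite !inE /= => ->.
split.
  by move=> a b; rewrite !inE => /eqP -> /eqP ->; rewrite /attacks /= !inE.
move=> T HT cf H1; apply/fsetP => x; rewrite inE.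
apply/idP/idP; last by move=> /eqP ->; apply: (fsubsetP H1); rewrite inE.
move=> xT; have := fsubsetP HT x xT; rewrite /= !inE => /orP [//|/eqP x2].
have h1 : 1%N \in T by apply: (fsubsetP H1); rewrite inE.
subst x; have := cf _ _ h1 xT; by rewrite /attacks /= inE.
Qed.

Lemma mcf2 : maximal_conflict_free F2 [fset 2%N].
Proof.
split; first by apply/fsubsetP => x; rewrite !inE /= => ->; rewrite orbT.
split.
  by move=> a b; rewrite !inE => /eqP -> /eqP ->; rewrite /attacks /= !inE.
move=> T HT cf H1; apply/fsetP => x; rewrite inE.
apply/idP/idP; last by move=> /eqP ->; apply: (fsubsetP H1); rewrite inE.
move=> xT; have := fsubsetP HT x xT; rewrite /= !inE => /orP [/orP [/eqP x1|//]|/eqP x3].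
have h1 : 2%N \in T by apply: (fsubsetP H1); rewrite inE.
- subst x; have := cf _ _ xT h1; by rewrite /attacks /= !inE.
have h1 : 2%N \in T by apply: (fsubsetP H1); rewrite inE.
subst x; have := cf _ _ xT h1; by rewrite /attacks /= !inE.
Qed.

Theorem proposition53 :
  exists sigma : semantics,
    (forall (F : AF) (E : {fset nat}), sigma F E -> maximal_conflict_free F E) /\
    exists F F' : AF,
      normal_expansion F F' /\
      ~ ((forall E, sigma F E ->
            new_attacks_on F F' E = fset0 ->
            forall E', sigma F' E' -> E `<=` E') ->
         forall E E', sigma F E -> sigma F' E' ->
            ~ (E' `<=` AR F) \/ E' = E).
Proof.
exists sig; split; first by move=> F E [].
exists F1, F2; split.
  split; first by apply/fsubsetP => x; rewrite /= !inE => ->.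
  split; first by apply/fsubsetP => x; rewrite /= !inE => ->.
  move=> p; rewrite /= !inE => /orP [/orP [/eqP->|/eqP->]|/eqP->] //= _; by rewrite !inE.
move=> H.
have s1 : sig F1 [fset 1%N] by split; [exact: mcf1 | split; rewrite /= !inE].
have s2 : sig F2 [fset 2%N] by split; [exact: mcf2 | split; rewrite /= !inE].
have P : (forall E, sig F1 E -> new_attacks_on F1 F2 E = fset0 ->
            forall E', sig F2 E' -> E `<=` E').
  move=> E [_ [_ h]] Hn; rewrite h /= ?inE // in Hn.
  have : (3%N, 1%N) \in new_attacks_on F1 F2 [fset 1%N] by rewrite /new_attacks_on !inE.
  by rewrite Hn inE.
case: (H P _ _ s1 s2).
  by case; apply/fsubsetP => x; rewrite /= !inE => /eqP ->.
by move/fsetP/(_ 2%N); rewrite !inE.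
Qed.
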